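(* Let $n,k$ be integers with $3 \le k < n$, and consider the oriented $(n,k)$-star graph $\overrightarrow{S_{n,k}}$ with the clique-edge orientation described in the context. Let $v$ be a vertex and let $Q(v)$ be the oriented fundamental clique containing $v$. Let $n_E$ and $n_O$ denote the numbers of even-signed and odd-signed vertices in $Q(v)$. Then $n_E = n_O$ when $n-k$ is odd, and $|n_E - n_O| = 1$ when $n-k$ is even. Furthermore, $v$ has at least $\left\lfloor \frac{n-k}{2}\right\rfloor$ out-neighbours in $Q(v)$.
   Context: For integers $1 \le k < n$, the $(n,k)$-star graph $S_{n,k}$ has as vertices the $k$-permutations $u_1u_2\cdots u_k$ of $\{1,\dots,n\}$ (sequences of $k$ distinct elements). The clique neighbours of $u_1u_2\cdots u_k$ are the vertices $xu_2\cdots u_k$ with $x\in\{1,\dots,n\}\setminus\{u_1,\dots,u_k\}$; a vertex together with its clique neighbours forms a complete subgraph on $n-k+1$ vertices, called its fundamental clique (its edges are clique edges). (There are also star edges, joining $u_1\cdots u_k$ to the vertex obtained by swapping $u_1$ and $u_i$, $2\le i\le k$, but they play no role here.) The extended permutation label of a vertex $u = u_1\cdots u_k$ is the permutation $\sigma_u = u_1u_2\cdots u_k u_{k+1}\cdots u_n$ of $\{1,\dots,n\}$, where $u_{k+1}<u_{k+2}<\cdots<u_n$ is the increasing listing of $\{1,\dots,n\}\setminus\{u_1,\dots,u_k\}$. A vertex is even-signed (odd-signed) if $\sigma_u$ has an even (odd) number of inversions. Orientation of clique edges: for a clique edge $\{u,w\}$, if $\sigma_u$ and $\sigma_w$ have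 the same sign, the edge is directed from $u$ to $w$ iff $\sigma_u(1) > \sigma_w(1)$; if they have opposite signs, the edge is directed from $u$ to $w$ iff $\sigma_u(1) < \sigma_w(1)$. The oriented fundamental clique $Q(v)$ is the fundamental clique of $v$ with this orientation. *)

(* Defs.v *)
(* Vertices of S_{n,k} are sequences of k distinct elements of {1..n}. *)
From mathcomp Require Import all_boot.
Set Implicit Arguments. Unset Strict Implicit. Unset Printing Implicit Defensive.

Definition is_vertex (n k : nat) (u : seq nat) : bool :=
  [&& size u == k, uniq u & all (fun x => (1 <= x) && (x <= n)) u].

Definition ext_label (n : nat) (u : seq nat) : seq nat :=
  u ++ [seq x <- iota 1 n | x \notin u].

Definition inversions (s : seq nat) : nat :=
  \sum_(i < size s) \sum_(j < size s) ((i < j) && (nth 0 s j < nth 0 s i)).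

Definition even_signed (n : nat) (u : seq nat) : bool := ~~ odd (inversions (ext_label n u)).
Definition odd_signed (n : nat) (u : seq nat) : bool := odd (inversions (ext_label n u)).

Definition clique_nbrs (n : nat) (u : seq nat) : seq (seq nat) :=
  [seq x :: behead u | x <- iota 1 n & x \notin u].

Definition fund_clique (n : nat) (u : seq nat) : seq (seq nat) := u :: clique_nbrs n u.

(* orientation of the clique edge {u,w}: true iff directed from u to w *)
Definition clique_arc (n : nat) (u w : seq nat) : bool :=
  let su := head 0 (ext_label n u) in
  let sw := head 0 (ext_label n w) in
  if even_signed n u == even_signed n w then sw < su else su < sw.

(* Main.v *)
Require Import Defs.
From mathcomp Require Import all_boot.
From mathcomp Require Import zify.

Fixpoint inv' (s : seq nat) : nat :=
  if s is a :: s' then count (fun y => y < a) s' + inv' s' else 0.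

Definition cross (s1 s2 : seq nat) : nat :=
  sumn [seq count (fun y => y < a) s2 | a <- s1].

Lemma count_sum (p : pred nat) s : count p s = \sum_(j < size s) p (nth 0 s j).
Proof.
elim: s => [|a s IH] /=; first by rewrite big_ord0.
by rewrite big_ord_recl IH /=; congr (_ + _); apply: eq_bigr => i _; rewrite lift0.
Qed.

Lemma inversionsE s : inversions s = inv' s.
Proof.
rewrite /inversions; elim: s => [|a s IH] /=; first by rewrite big_ord0.
rewrite big_ord_recl big_ord_recl /= add0n -IH count_sum; congr (_ + _).
  idtac.
apply: eq_bigr => i _; rewrite big_ord_recl /= add0n.
by apply: eq_bigr => j _; rewrite /bump !add0n !add1n ltnS.
Qed.

Lemma inv'_cat s1 s2 : inv' (s1 ++ s2) = inv' s1 + inv' s2 + cross s1 s2.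
Proof.
rewrite /cross; elim: s1 => [|a s1 IH] /=; first by rewrite addn0.
rewrite count_cat IH; lia.
Qed.

Lemma inv'_sorted s : sorted ltn s -> inv' s = 0.
Proof.
elim: s => [|a s IH] //= Hp.
rewrite IH ?(path_sorted Hp) // addn0.
apply/eqP; rewrite -leqn0 leqNgt -has_count; apply/hasP => -[y Hy Hya].
have := allP (order_path_min ltn_trans Hp) y Hy; rewrite /= => H.
by have := ltn_trans H Hya; rewrite ltnn.
Qed.

Lemma count_rem (p : pred nat) S x : uniq S -> x \in S ->
  count p S = p x + count p (filter (predC1 x) S).
Proof.
move=> Hu Hx; rewrite -rem_filter //.
by rewrite (permP (perm_to_rem Hx)).
Qed.

Lemma count_lt_gt x t : x \notin t ->
  count (fun y => y < x) t + count (fun a => x < a) t = size t.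
Proof.
elim: t => [|a t IH] //=; rewrite in_cons negb_or => /andP[Hxa Ht].
rewrite -(IH Ht); case: ltngtP Hxa => // _ _; lia.
Qed.

Lemma count_iota_odd b m n :
  count (fun j => b (+) odd j) (iota m n) = if b (+) odd m then uphalf n else half n.
Proof.
elim: n m => [|n IH] m /=; first by case: ifP.
rewrite IH /=; case: b IH => IH; case: (odd m) => //=.
Qed.

Lemma map_pos S : sorted ltn S ->
  [seq count (fun y => y < x) S | x <- S] = iota 0 (size S).
Proof.
elim: S => [|a S IH] //= Hp.
have Ha := order_path_min ltn_trans Hp.
rewrite ltnn add0n.
have -> : count (fun y => y < a) S = 0.
  apply/eqP; rewrite -leqn0 leqNgt -has_count; apply/hasP => -[y Hy Hya].
  have := allP Ha y Hy; rewrite /= => H.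
  by have := ltn_trans H Hya; rewrite ltnn.
congr (_ :: _).
rewrite -(addn0 1) iotaDl -IH ?(path_sorted Hp) // -map_comp.
apply/eq_in_map => y Hy /=; by rewrite (allP Ha y Hy).
Qed.

Lemma final_arith p N : p < N ->
  half N.-1 <= count (fun j => (j != p) && (if odd p == odd j then j < p else p < j)) (iota 0 N).
Proof.
move=> HpN.
have -> : N = p + (1 + (N - p - 1)) by lia.
rewrite iotaD iotaD !count_cat /= add0n.
set r := N - p - 1.
have E1 : count (fun j => (j != p) && (if odd p == odd j then j < p else p < j)) (iota 0 p)
   = count (fun j => ~~ odd p (+) odd j) (iota 0 p).
  apply: eq_in_count => j; rewrite mem_iota => /andP[_ Hj].
  rewrite add0n in Hj.
  rewrite (ltn_eqF Hj) Hj (leq_gtF (ltnW Hj)) /=.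
  by case: (odd p); case: (odd j).
have E2 : count (fun j => (j != p) && (if odd p == odd j then j < p else p < j)) (iota (p + 1) r)
   = count (fun j => odd p (+) odd j) (iota (p+1) r).
  apply: eq_in_count => j; rewrite mem_iota => /andP[Hj _].
  have Hj' : p < j by rewrite addn1 in Hj.
  rewrite (gtn_eqF Hj') Hj' (leq_gtF (ltnW Hj')) /=.
  by case: (odd p); case: (odd j).
rewrite E1 E2 !count_iota_odd eqxx ltnn andFb add0n addn1 /= addbN addbb /=.
have -> : (p + (1 + r)).-1 = p + r by rewrite add1n addnS.
rewrite halfD uphalf_half.
rewrite !uphalf_half; case: (odd p); case: (odd r) => /=; lia.
Qed.

Lemma cross_rem S x t : uniq S -> x \in S ->
  cross t S = cross t (filter (predC1 x) S) + count (fun a => x < a) t.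
Proof.
move=> Hu Hx; rewrite /cross; elim: t => [|a t IH] //=.
rewrite IH (@count_rem (fun y => y < a) S x Hu Hx) /=; case: (x < a); lia.
Qed.

Lemma parity_key t S x : uniq S -> sorted ltn S -> x \in S -> x \notin t ->
  odd (inv' (x :: t ++ filter (predC1 x) S)) =
  (odd (size t) (+) odd (inv' t + cross t S)) (+) odd (count (fun y => y < x) S).
Proof.
move=> Hu Hs Hx Hxt.
rewrite /= count_cat inv'_cat (inv'_sorted _ (sorted_filter ltn_trans _ Hs)) addn0.
have e1 : count (fun y => y < x) (filter (predC1 x) S) = count (fun y => y < x) S.
  rewrite count_filter; apply: eq_count => y /=.
  by case: eqVneq => [->|]; rewrite ?ltnn ?andbT.
rewrite e1 (@cross_rem S x t Hu Hx) -(@count_lt_gt x t Hxt) !oddD.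
by do 5! case: (odd _).
Qed.

Lemma count_nth_iota (P : pred nat) S :
  count P S = count (fun j => P (nth 0 S j)) (iota 0 (size S)).
Proof.
by rewrite -[in LHS](mkseq_nth 0 S) /mkseq count_map.
Qed.

Lemma pos_nth S j : sorted ltn S -> j < size S -> count (fun y => y < nth 0 S j) S = j.
Proof.
move=> Hs Hj.
have := congr1 (fun s => nth 0 s j) (@map_pos S Hs).
by rewrite /= (nth_map 0) // nth_iota.
Qed.

Lemma mono_nth S i j : sorted ltn S -> i < size S -> j < size S ->
  (nth 0 S i < nth 0 S j) = (i < j).
Proof.
move=> Hs Hi Hj.
have H := sorted_ltn_nth ltn_trans 0 Hs.
case: (ltngtP i j) => h.
- by apply: H.
- by rewrite ltnNge ltnW // H.
- by rewrite h ltnn.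
Qed.

Lemma size_filter_notin n t : uniq t -> all (fun x => (1 <= x) && (x <= n)) t ->
  size [seq y <- iota 1 n | y \notin t] = n - size t.
Proof.
move=> Hu Ha.
have H1 : size [seq y <- iota 1 n | y \in t] = size t.
  apply: perm_size; apply: uniq_perm; rewrite ?filter_uniq ?iota_uniq //.
  move=> y; rewrite mem_filter mem_iota.
  case Hy: (y \in t) => //=.
  by move/allP: Ha => /(_ y Hy) /andP[h1 h2]; rewrite h1 /=; lia.
have := count_predC (mem t) (iota 1 n).
rewrite size_iota -!size_filter H1 => E; rewrite -[in RHS]E addKn.
by [].
Qed.

Theorem proposition1 (n k : nat) (v : seq nat) :
  3 <= k -> k < n -> is_vertex n k v ->
  let nE := count (even_signed n) (fund_clique n v) in
  let nO := count (odd_signed n) (fund_clique n v) in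
  (odd (n - k) -> nE = nO) /\
  (~~ odd (n - k) -> nE = nO.+1 \/ nO = nE.+1) /\
  half (n - k) <= count (clique_arc n v) (clique_nbrs n v).
Proof.
move=> Hk Hkn; case: v => [|v1 t]; first by rewrite /is_vertex /= => /andP[/eqP Hk0]; move: Hk; rewrite -Hk0.
rewrite /is_vertex /= => /and3P[/eqP Hsz /andP[Hv1t Hut] /andP[Hv1r Har]].
set S := [seq y <- iota 1 n | y \notin t].
have HSu : uniq S by rewrite filter_uniq ?iota_uniq.
have HSs : sorted ltn S by exact: (sorted_filter ltn_trans _ (iota_ltn_sorted 1 n)).
have Hv1S : v1 \in S.
  by rewrite mem_filter Hv1t mem_iota /=; move: Hv1r => /andP[h1 h2]; rewrite h1 /=; lia.
have Hfilt x : [seq y <- iota 1 n | y \notin x :: t] = filter (predC1 x) S.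
  by rewrite -filter_predI; apply: eq_filter => y; rewrite /= in_cons negb_or.
have HN : size S = (n - k).+1.
  rewrite (@size_filter_notin n t Hut Har) -Hsz subnS prednK // subn_gt0; rewrite -Hsz in Hkn; exact: ltnW.
set N := size S.
set f := nth 0 S.
set c0 := odd (size t) (+) odd (inv' t + cross t S).
have Hpar j : j < N -> odd (inversions (ext_label n (f j :: t))) = c0 (+) odd j.
  move=> Hj; have HfS : f j \in S by apply: mem_nth.
  have Hft : f j \notin t by move: HfS; rewrite mem_filter => /andP[].
  rewrite inversionsE /ext_label Hfilt cat_cons parity_key //.
  by rewrite /f pos_nth.
have Hclique (P : pred (seq nat)) :
    count P (fund_clique n (v1 :: t)) = count (fun j => P (f j :: t)) (iota 0 N).
  rewrite /fund_clique /clique_nbrs /= Hfilt count_map.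
  rewrite /N /f -(count_nth_iota (fun x => P (x :: t)) S).
  by rewrite (@count_rem (fun x => P (x :: t)) S v1 HSu Hv1S).
have HE : count (even_signed n) (fund_clique n (v1 :: t)) = if ~~ c0 then uphalf N else half N.
  rewrite Hclique; have := count_iota_odd (~~ c0) 0 N; rewrite /= addbF => <-.
  apply: eq_in_count => j; rewrite mem_iota add0n => /andP[_ Hj].
  by rewrite /even_signed /= Hpar // addNb.
have HO : count (odd_signed n) (fund_clique n (v1 :: t)) = if c0 then uphalf N else half N.
  rewrite Hclique; have := count_iota_odd c0 0 N; rewrite /= addbF => <-.
  apply: eq_in_count => j; rewrite mem_iota add0n => /andP[_ Hj].
  by rewrite /odd_signed /= Hpar.
have HE' : even_signed n (v1 :: t) + count (even_signed n) (clique_nbrs n (v1 :: t)) = if ~~ c0 then uphalf N else half N := HE.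
have HO' : odd_signed n (v1 :: t) + count (odd_signed n) (clique_nbrs n (v1 :: t)) = if c0 then uphalf N else half N := HO.
rewrite HE' HO' /N HN.
split; [|split].
- by move=> Ho; case: c0 Hpar HE HO HE' HO' => Hpar HE HO HE' HO'; rewrite /= uphalf_half /= Ho.
- by move=> Ho; case: c0 Hpar HE HO HE' HO' => Hpar HE HO HE' HO'; rewrite /= uphalf_half /= (negbTE Ho); [right|left].
set p := index v1 S.
have Hp : p < N by rewrite index_mem.
have Hfp : f p = v1 by rewrite /f nth_index.
rewrite /clique_nbrs /= Hfilt count_map count_filter.
rewrite (count_nth_iota _ S) -/N -/f.
have -> : (n - k) = N.-1 by rewrite /N HN.
apply: leq_trans (@final_arith p N Hp) (eq_leq _).
apply: eq_in_count => j; rewrite mem_iota add0n => /andP[_ Hj] /=.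
rewrite [RHS]andbC; congr andb; first by rewrite -Hfp /f nth_uniq.
rewrite /clique_arc /ext_label /= -/(ext_label n (v1 :: t)) -/(ext_label n (f j :: t)).
rewrite -!Hfp /even_signed !Hpar // /f !mono_nth //.
by case: (c0); case: (odd p); case: (odd j).
Qed.
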